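(* For a polynomial $f(z)$ with complex coefficients define the rational function $$\mathcal{L}_z(f)=f\frac{d^2f}{dz^2}-\left(\frac{df}{dz}\right)^2+\frac{f}{z}\frac{df}{dz}.$$ Let $f(z)$ and $g(z)$ be arbitrary polynomials. Then: (a) $\mathcal{L}_z(kf)=k^2\,\mathcal{L}_z(f)$ for every constant $k$; (b) $\mathcal{L}_z(fg)=f^2\,\mathcal{L}_z(g)+g^2\,\mathcal{L}_z(f)$; (c) if $h=-z\,\mathcal{L}_z(f)+k(z+\mu)f^2$, where $k$ and $\mu$ are constants, then $f$ divides $z\,\mathcal{L}_z(h)-2k(z+\mu)h^2$ (in the polynomial ring $\mathbb{C}[z]$).
   Context: Here $\mathcal{L}_z$ is the Hirota-like operator defined in the claim; note that $h$ and $z\,\mathcal{L}_z(h)$ are polynomials when $f$ is a polynomial. *)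

(* Defs.v *)
From HB Require Import structures.
From mathcomp Require Import all_boot all_order all_algebra.
From mathcomp Require Import complex Rstruct.
From Stdlib Require Import Reals.
Set Implicit Arguments. Unset Strict Implicit. Unset Printing Implicit Defensive.
Import Order.TTheory GRing.Theory Num.Theory.
Local Open Scope ring_scope.

Definition CC : rcfType := Rdefinitions.R.
Notation Cplx := (complex CC).

Notation ratfun := {fraction {poly Cplx}}.
Notation "p %:RF" := (@tofrac _ p) (at level 2, format "p %:RF").

Definition Lz (f : {poly Cplx}) : ratfun :=
  f%:RF * (f^`(2))%:RF - (f^`())%:RF ^+ 2 + f%:RF / ('X)%:RF * (f^`())%:RF.

(* Main.v *)
Require Import Defs.
From HB Require Import structures.
From mathcomp Require Import all_boot all_order all_algebra.
From mathcomp Require Import complex Rstruct.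
From mathcomp Require Import ring.
Import Order.TTheory GRing.Theory Num.Theory.
Local Open Scope ring_scope.

Lemma d2 (p : {poly Cplx}) : p^`(2) = p^`()^`().
Proof. by []. Qed.
Lemma X_neq0 : ('X : {poly Cplx})%:RF != 0.
Proof. by rewrite tofrac_eq0 polyX_eq0. Qed.

Lemma gXL (F : fieldType) (x a b c : F) : x != 0 ->
  x * (a * c - b ^+ 2 + a / x * b) = x * (a * c + - b ^+ 2) + a * b.
Proof. by move=> hx; field. Qed.
Lemma gA (F : fieldType) (x K a b c : F) :
  K * a * (K * c) - (K * b) ^+ 2 + K * a / x * (K * b) =
  K ^+ 2 * (a * c - b ^+ 2 + a / x * b).
Proof. by ring. Qed.
Lemma gB (F : fieldType) (x a b c a' b' c' : F) :
  a * a' * (c * a' + b * b' + (b * b' + a * c')) - (b * a' + a * b') ^+ 2 +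
  a * a' / x * (b * a' + a * b') =
  a ^+ 2 * (a' * c' - b' ^+ 2 + a' / x * b') + a' ^+ 2 * (a * c - b ^+ 2 + a / x * b).
Proof. by ring. Qed.

Lemma XLz (g : {poly Cplx}) :
  ('X)%:RF * Lz g = ('X * (g * g^`()^`() - g^`() ^+ 2) + g * g^`())%:RF.
Proof.
rewrite /Lz d2 !(rmorphD, rmorphM, rmorphB, rmorphN, rmorphXn) /=.
exact: gXL X_neq0.
Qed.
Lemma partA (f : {poly Cplx}) (k : Cplx) : Lz (k%:P * f) = (k%:P)%:RF ^+ 2 * Lz f.
Proof.
rewrite /Lz !d2 !deriv_mulC !(rmorphD, rmorphM, rmorphB, rmorphXn) /=.
exact: gA.
Qed.
Lemma partB (f g : {poly Cplx}) : Lz (f * g) = f%:RF ^+ 2 * Lz g + g%:RF ^+ 2 * Lz f.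
Proof.
rewrite /Lz !d2 !(derivM, derivD) !(rmorphD, rmorphM, rmorphB, rmorphXn) /=.
exact: gB.
Qed.
Theorem lemma3p1 :
  (forall (f : {poly Cplx}) (k : Cplx), Lz (k%:P * f) = (k%:P)%:RF ^+ 2 * Lz f)
  /\ (forall f g : {poly Cplx}, Lz (f * g) = f%:RF ^+ 2 * Lz g + g%:RF ^+ 2 * Lz f)
  /\ (forall (f h : {poly Cplx}) (k mu : Cplx),
        h%:RF = - ('X)%:RF * Lz f + (k%:P * ('X + mu%:P) * f ^+ 2)%:RF ->
        exists q : {poly Cplx},
          ('X)%:RF * Lz h - (2%:R * k%:P * ('X + mu%:P) * h ^+ 2)%:RF = (f * q)%:RF).
Proof.
split; first exact: partA.
split; first exact: partB.
move=> f h k mu H.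
rewrite mulNr XLz -rmorphN -rmorphD in H.
move/eqP: H; rewrite tofrac_eq => /eqP hE.
rewrite XLz -rmorphB.
set f1 := f^`(). set f2 := f1^`(). set f3 := f2^`(). set f4 := f3^`().
exists ((-'X ^+3*f2^+3) + ('X ^+3*f*f2*f4) + (-(6%:R)*'X ^+2*k%:P*f*f1*f2) + (-(3%:R)*'X ^+3*k%:P*f*f2^+2) + (-(3%:R)*'X ^+2*mu%:P*k%:P*f*f2^+2) + (-(4%:R)*'X ^+2*f1^+2*f3) + (-'X ^+3*f1^+2*f4) + (8%:R*'X ^+2*k%:P*f1^+3) + (-(2%:R)*'X*f1^+2*f2) + (4%:R*'X*f*f1*f3) + ('X ^+2*f*f1*f4) + (-(7%:R)*'X*k%:P*f*f1^+2) + (-(2%:R)*'X ^+2*k%:P*f^+2*f3) + (-'X ^+3*k%:P*f^+2*f4) + (-(6%:R)*'X ^+3*k%:P^+2*f*f1^+2) + (6%:R*'X ^+3*k%:P^+2*f^+2*f2) + (-(12%:R)*'X ^+2*mu%:P*k%:P^+2*f*f1^+2) + (12%:R*'X ^+2*mu%:P*k%:P^+2*f^+2*f2) + (-(4%:R)*'X*mu%:P*k%:P*f^+2*f3) + (-'X ^+2*mu%:P*k%:P*f^+2*f4) + (-(6%:R)*'X*mu%:P^+2*k%:P^+2*f*f1^+2) + (6%:R*'X*mu%:P^+2*k%:P^+2*f^+2*f2) + (-(2%:R)*'X*f*f2^+2) + (3%:R*'X ^+2*f1*f2^+2) + ('X*k%:P*f^+2*f2) + (2%:R*'X ^+3*f1*f2*f3)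 + (-'X ^+3*f*f3^+2) + (4%:R*'X ^+3*k%:P*f*f1*f3) + (4%:R*'X ^+2*mu%:P*k%:P*f*f1*f3) + (2%:R*f*f1*f2) + (-k%:P*f^+2*f1) + (-(4%:R)*mu%:P*k%:P*f*f1^+2) + (6%:R*'X ^+2*k%:P^+2*f^+2*f1) + (12%:R*'X*mu%:P*k%:P^+2*f^+2*f1) + (-(2%:R)*mu%:P*k%:P*f^+2*f2) + (mu%:P*k%:P^+2*f^+3) + (6%:R*mu%:P^+2*k%:P^+2*f^+2*f1) + (-(2%:R)*'X ^+3*k%:P^+3*f^+3) + (-(6%:R)*'X ^+2*mu%:P*k%:P^+3*f^+3) + (-(6%:R)*'X*mu%:P^+2*k%:P^+3*f^+3) + (4%:R*'X*mu%:P*k%:P*f1^+3) + (-(2%:R)*mu%:P^+3*k%:P^+3*f^+3)).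
congr (_%:RF).
rewrite hE !derivE -/f1 -/f2 -/f3 -/f4.
by ring.
Qed.
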